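(* Let $\mathbf S$ be a specialization semilattice and let $\widetilde S$, its join $\vee$ and the map $K$ be as in the context. Then $(\widetilde S,\vee,K)$ is a closure semilattice, i.e. for all $x,y\in\widetilde S$: $x\le Kx$, $KKx=Kx$, and $x\le y$ implies $Kx\le Ky$.
   Context: A specialization semilattice is a triple $\mathbf S=(S,\vee,\sqsubseteq)$ where $(S,\vee)$ is a join-semilattice, with induced order $a\le b$ iff $a\vee b=b$, and $\sqsubseteq$ is a binary relation on $S$ such that for all $a,b,c,a_1\in S$: (S1) $a\le b$ implies $a\sqsubseteq b$; (S2) $a\sqsubseteq b$ and $b\sqsubseteq c$ imply $a\sqsubseteq c$; (S3) $a\sqsubseteq b$ and $a_1\sqsubseteq b$ imply $a\vee a_1\sqsubseteq b$. Write $\vee_S,\le_S,\sqsubseteq_S$ for the operations/relations of $\mathbf S$. Let $S^{<\omega}$ be the set of finite subsets of $S$. On $S\times S^{<\omega}$ define $(a,B)\precsim(c,D)$, where $D=\{d_1,\dots,d_k\}$ ($k\ge 0$), to hold iff (a1) there exist $d_1^*,\dots,d_k^*\in S$ with $d_j^*\sqsubseteq_S d_j$ for each $j\le k$ and $a\le_S c\vee_S d_1^*\vee_S\cdots\vee_S d_k^*$ (when $D=\emptyset$ this means $a\le_S c$); and (a2) for every $b\in B$ there is $d\in D$ with $b\sqsubseteq_S d$. Let $(a,B)\sim(c,D)$ iff $(a,B)\precsim(c,D)$ and $(c,D)\precsim(a,B)$; this is an equivalence relation. Let $\widetilde S$ be the set of $\sim$-classes, and $[a,B]$ the class of $(a,B)$.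 The join $[a,B]\vee[c,D]=[a\vee_S c,B\cup D]$ on $\widetilde S$ (with induced order $\le$) and the map $K[a,\{b_1,\dots,b_h\}]=[a,\{a\vee_S b_1\vee_S\cdots\vee_S b_h\}]$ are well defined. A closure semilattice is a join-semilattice with a unary operation $K$ that is extensive, idempotent and isotone. *)

(* Defs.v *)
From HB Require Import structures.
From mathcomp Require Import all_boot all_order.
From mathcomp Require Import finmap.
Set Implicit Arguments. Unset Strict Implicit. Unset Printing Implicit Defensive.
Import Order.TTheory.
Local Open Scope order_scope.


(* A specialization semilattice is given by a join-semilattice S
   (MathComp's joinSemilatticeType, whose order satisfies
   x <= y <-> x `|` y = y) together with a relation sp satisfying
   (S1)-(S3); these axioms are stated as hypotheses of the theorem. *)

Section Tilde.
Context {disp : Order.disp_t} {S : joinSemilatticeType disp} (sp : rel S).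

Definition rep := (S * {fset S})%type.

(* c `|` d1* `|` ... `|` dk* , with dj* = f dj *)
Definition joinmap (c : S) (f : S -> S) (D : {fset S}) : S :=
  foldr (fun d acc => Order.join (f d) acc) c (enum_fset D).

Definition precsim (x y : rep) : Prop :=
  let: (a, B) := x in let: (c, D) := y in
  (exists f : S -> S, (forall d, d \in D -> sp (f d) d) /\ a <= joinmap c f D)
  /\ (forall b, b \in B -> exists2 d, d \in D & sp b d).

Definition simeq (x y : rep) : Prop := precsim x y /\ precsim y x.

Definition tjoin (x y : rep) : rep := (Order.join x.1 y.1, fsetU x.2 y.2).

Definition tle (x y : rep) : Prop := simeq (tjoin x y) y.

Definition tK (x : rep) : rep :=
  (x.1, (fset1 (foldr (fun b acc => Order.join b acc) x.1 (enum_fset x.2)))).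

End Tilde.

(* Main.v *)
Require Import Defs.
From HB Require Import structures.
From mathcomp Require Import all_boot all_order.
From mathcomp Require Import finmap.
Import Order.TTheory.
Local Open Scope order_scope.

Section Aux.
Context {disp : Order.disp_t} {S : joinSemilatticeType disp}.

Lemma foldr_le (c : S) (f : S -> S) (s : seq S) (z : S) :
  (foldr (fun d acc => Order.join (f d) acc) c s <= z) =
  (c <= z) && all (fun d => f d <= z) s.
Proof.
elim: s => [|d s IH] /=; first by rewrite andbT.
by rewrite leUx IH andbCA.
Qed.

Lemma joinmap_le (c : S) (f : S -> S) (D : {fset S}) (z : S) :
  joinmap c f D <= z <-> c <= z /\ (forall d, d \in D -> f d <= z).
Proof.
rewrite /joinmap foldr_le; split.
  by move=> /andP[-> /allP H]; split=> // d Hd; apply: H.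
by move=> [-> H] /=; apply/allP=> d Hd; apply: H.
Qed.

Lemma joinmap_leI (c : S) (f : S -> S) (D : {fset S}) (z : S) :
  c <= z -> (forall d, d \in D -> f d <= z) -> joinmap c f D <= z.
Proof. by move=> H1 H2; apply/joinmap_le. Qed.

Lemma joinmap_ge (c : S) (f : S -> S) (D : {fset S}) :
  c <= joinmap c f D /\ (forall d, d \in D -> f d <= joinmap c f D).
Proof. by apply/joinmap_le. Qed.

Lemma joinmap_sp (sp : rel S)
  (S3 : forall a a1 b : S, sp a b -> sp a1 b -> sp (a `|` a1) b)
  (c : S) (f : S -> S) (D : {fset S}) (z : S) :
  sp c z -> (forall d, d \in D -> sp (f d) z) -> sp (joinmap c f D) z.
Proof.
move=> Hc H; rewrite /joinmap.
have : forall d, d \in enum_fset D -> sp (f d) z by [].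
elim: (enum_fset D) => [|d s IH] //= Hs.
apply: S3; first by apply: Hs; rewrite inE eqxx.
by apply: IH => e He; apply: Hs; rewrite inE He orbT.
Qed.
End Aux.

Theorem claim3p7 (disp : Order.disp_t) (S : joinSemilatticeType disp)
  (sp : rel S)
  (S1 : forall a b : S, a <= b -> sp a b)
  (S2 : forall a b c : S, sp a b -> sp b c -> sp a c)
  (S3 : forall a a1 b : S, sp a b -> sp a1 b -> sp (a `|` a1) b) :
  (forall x : (S * {fset S})%type, tle sp x (tK x)) /\
  (forall x : (S * {fset S})%type, simeq sp (tK (tK x)) (tK x)) /\
  (forall x y : (S * {fset S})%type, tle sp x y -> tle sp (tK x) (tK y)).
Proof.
have tKE : forall a (B : {fset S}), tK (a, B) = (a, [fset joinmap a id B]%fset) by [].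
split; last split.
- case=> a B; rewrite tKE /tle /simeq /tjoin; cbn [fst snd].
  set s := joinmap a id B.
  have [Has HBs] := joinmap_ge a id B.
  split; split.
  + exists (fun _ => a); split.
      by move=> d; rewrite inE => /eqP ->; apply: S1.
    by rewrite joinxx; exact: (proj1 (joinmap_ge _ _ _)).
  + move=> b; rewrite !inE => /orP[Hb|Hb]; exists s; rewrite ?inE //.
      by apply: S1; apply: HBs.
    by move/eqP: Hb => ->; apply: S1.
  + exists id; split; first by move=> d _; apply: S1.
    have [H _] := joinmap_ge (a `|` a) id (B `|` [fset s]%fset)%fset.
    by apply: le_trans H; rewrite leUl.
  + move=> b; rewrite inE => /eqP ->; exists s; last by apply: S1.
    by rewrite !inE eqxx orbT.
- case=> a B; rewrite !tKE /simeq; cbn [fst snd].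
  set s := joinmap a id B.
  have [Has _] := joinmap_ge a id B.
  have [Has' Hss'] := joinmap_ge a id [fset s]%fset.
  have Hs1 : s \in [fset s]%fset by rewrite inE.
  split; split.
  + exists id; split; first by move=> d _; apply: S1.
    exact: (proj1 (joinmap_ge a id [fset s]%fset)).
  + move=> b; rewrite inE => /eqP ->; exists s => //.
    by apply: S1; apply: joinmap_leI => // d; rewrite inE => /eqP ->.
  + exists id; split; first by move=> d _; apply: S1.
    exact: (proj1 (joinmap_ge _ _ _)).
  + move=> b; rewrite inE => /eqP ->; exists (joinmap a id [fset s]%fset); first by rewrite inE.
    by apply: S1; apply: Hss'.
- case=> a B [c D]; rewrite !tKE /tle /simeq /tjoin; cbn [fst snd].
  move=> [[[f [Hf Hle]] H2] _].
  set sx := joinmap a id B; set sy := joinmap c id D.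
  have [Hcy HDy] := joinmap_ge c id D.
  have Hspc : sp c sy by apply: S1.
  have HspJ : sp (joinmap c f D) sy.
    apply: joinmap_sp => // d Hd; apply: S2 (Hf d Hd) _; apply: S1; exact: HDy.
  have Hac : a `|` c <= joinmap c f D := Hle.
  have Hspa : sp a sy.
    apply: S2 HspJ; apply: S1; apply: le_trans Hac; exact: leUl.
  have Hspx : sp sx sy.
    apply: joinmap_sp => // b Hb.
    have [d Hd Hbd] : exists2 d, d \in D & sp b d by apply: H2; rewrite inE Hb.
    by apply: S2 Hbd _; apply: S1; apply: HDy.
  have Hyin : sy \in [fset sy]%fset by rewrite inE.
  split; split.
  + exists (fun _ => a `|` c); split.
      by move=> d; rewrite inE => /eqP ->; apply: S3.
    exact: (proj2 (joinmap_ge c (fun=> a `|` c) [fset sy]%fset) sy Hyin).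
  + move=> b; rewrite !inE => /orP[/eqP ->|/eqP ->]; exists sy => //.
    by apply: S1.
  + exists id; split; first by move=> d _; apply: S1.
    have [H _] := joinmap_ge (a `|` c) id ([fset sx] `|` [fset sy]%fset)%fset.
    by apply: le_trans H; rewrite leUr.
  + move=> b; rewrite inE => /eqP ->; exists sy; last by apply: S1.
    by rewrite !inE eqxx orbT.
Qed.
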